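(* For any integers $p,d\ge2$, any $p$-element poset $P$ and any positive integer $k$, $$sat([k]^d,P)\le\sum_{r=d}^{d+p-2}s_{k,d,r}.$$
   Context: $[k]^d$ is ordered coordinatewise. The rank of $x\in[k]^d$ is $\sum_i x_i$, and $s_{k,d,r}$ is the number of elements of $[k]^d$ of rank $r$. For posets $P,R$, $P$ is a weak subposet of $R$ if there is an injection $i:P\to R$ with $p\le_P p'\Rightarrow i(p)\le_R i(p')$. A subset $F\subseteq Q$ is weak $P$-saturated if $F$ is weak $P$-free (does not contain $P$ as a weak subposet) but for every $x\in Q\setminus F$, $F\cup\{x\}$ contains $P$ as a weak subposet. $sat(Q,P)$ is the minimum size of a weak $P$-saturated subset of $Q$. *)

(* Defs.v *)
From mathcomp Require Import all_boot all_order.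
Set Implicit Arguments. Unset Strict Implicit. Unset Printing Implicit Defensive.

(* The grid [k]^d, encoded as functions 'I_d -> 'I_k; coordinate value
   j : 'I_k stands for j+1 in {1,..,k}. *)
Definition grid (k d : nat) := {ffun 'I_d -> 'I_k}.

Definition grid_le (k d : nat) : rel (grid k d) :=
  fun x y => [forall i, x i <= y i].

Definition grid_rank (k d : nat) (x : grid k d) : nat := \sum_(i < d) (x i).+1.

Definition s_kdr (k d r : nat) : nat := #|[set x : grid k d | grid_rank x == r]|.

Definition contains_weak (dP : Order.disp_t) (P : finPOrderType dP)
  (Q : finType) (leQ : rel Q) (F : {set Q}) : bool :=
  [exists f : {ffun P -> Q}, [&& injectiveb f, [forall x, f x \in F] &
                        [forall x, forall y, (x <= y)%O ==> leQ (f x) (f y)]]].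

Definition weak_free dP (P : finPOrderType dP) (Q : finType) (leQ : rel Q)
  (F : {set Q}) : bool := ~~ contains_weak P leQ F.

Definition weak_saturated dP (P : finPOrderType dP) (Q : finType) (leQ : rel Q)
  (F : {set Q}) : bool :=
  weak_free P leQ F && [forall x, (x \notin F) ==> contains_weak P leQ (x |: F)].

(* sat(Q,P): the minimum size of a weak P-saturated subset of Q.
   (Any such subset has size <= #|Q|, so the default #|Q| never undercuts the
   true minimum when a saturated family exists.) *)
Definition sat dP (P : finPOrderType dP) (Q : finType) (leQ : rel Q) : nat :=
  \big[minn/#|Q|]_(F : {set Q} | weak_saturated P leQ F) #|F|.

(* Main.v *)
Require Import Defs.
From mathcomp Require Import all_boot all_order.
From mathcomp Require Import zify.
Set Implicit Arguments. Unset Strict Implicit. Unset Printing Implicit Defensive.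

Lemma bigmin_le (T : finType) (P : pred T) (F : T -> nat) m j :
  P j -> \big[minn/m]_(i | P i) F i <= F j.
Proof.
move=> Pj; rewrite unlock.
have : j \in index_enum T by rewrite mem_index_enum.
elim: (index_enum T) => [|x r IH] //=; rewrite inE => /orP [/eqP <-|jr].
  by rewrite Pj geq_minl.
case: (P x); last exact: IH.
exact: leq_trans (geq_minr _ _) (IH jr).
Qed.

Section Grid.
Variables k d : nat.
Local Notation Q := (grid k d).

Definition rank0 (x : Q) : nat := \sum_(i < d) (x i : nat).

Lemma grid_le_refl (x : Q) : grid_le x x.
Proof. by apply/forallP. Qed.

Lemma grid_le_trans (x y z : Q) : grid_le x y -> grid_le y z -> grid_le x z.
Proof.
move=> /forallP H1 /forallP H2; apply/forallP=> i; exact: leq_trans (H1 i) (H2 i).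
Qed.

Lemma rank0_lt (x y : Q) : grid_le x y -> x != y -> rank0 x < rank0 y.
Proof.
move=> /forallP H neq.
have [i Hi]: exists i, x i != y i.
  apply/existsP; apply: contraR neq => /existsPn Hn; apply/eqP/ffunP => i.
  by apply/eqP; move: (Hn i); rewrite negbK.
have lt : (x i < y i)%N.
  by rewrite ltn_neqAle H andbT; apply: contraNneq Hi => e; apply/eqP/val_inj.
rewrite /rank0 (bigD1 i) //= [X in _ < X](bigD1 i) //=.
have : \sum_(j < d | j != i) (x j : nat) <= \sum_(j < d | j != i) (y j : nat).
  by apply: leq_sum => j _; exact: H.
move=> h; rewrite -addSn; exact: leq_add lt h.
Qed.

Lemma rank0_pred (z : Q) : 0 < rank0 z -> exists z', grid_le z' z /\ rank0 z' = (rank0 z).-1.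
Proof.
move=> hz.
have [j Hj] : exists j, 0 < z j.
  apply/existsP; apply: contraLR hz => /existsPn Hn; rewrite -leqNgt leqn0 /rank0.
  apply/eqP; apply: big1 => i _; move: (Hn i); rewrite lt0n negbK => /eqP //.
have Hlt : (z j).-1 < k by exact: leq_ltn_trans (leq_pred _) (ltn_ord _).
exists [ffun i => if i == j then Ordinal Hlt else z i]; split.
  apply/forallP => i; rewrite ffunE; case: eqP => [->|_] /=; [exact: leq_pred | exact: leqnn].
rewrite /rank0 (bigD1 j) //= [in RHS](bigD1 j) //= ffunE eqxx /=.
rewrite (eq_bigr (fun i => (z i : nat))); last by move=> i /negbTE Hi; rewrite ffunE Hi.
by case: (nat_of_ord (z j)) Hj => [|m] //= _; rewrite addSn.
Qed.

Lemma chain_below n (z : Q) : rank0 z = n ->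
  exists c : nat -> Q, c n = z /\ (forall i, i <= n -> rank0 (c i) = i) /\
     (forall i j, i <= j -> j <= n -> grid_le (c i) (c j)).
Proof.
elim: n z => [|n IH] z hz.
  exists (fun _ => z); split=> //; split.
    by move=> i; rewrite leqn0 => /eqP ->.
  by move=> *; exact: grid_le_refl.
have hz0 : 0 < rank0 z by rewrite hz.
have [z' [z'z hz']] := rank0_pred hz0.
rewrite hz /= in hz'.
have [c [cn [crank cle]]] := IH z' hz'.
exists (fun i => if i == n.+1 then z else c i); split; first by rewrite eqxx.
split.
  move=> i; case: eqP => [->|ne] // hi; apply: crank; lia.
move=> i j ij jn; case: (j =P n.+1) => [ej|nej].
  case: (i =P n.+1) => [_|nei]; first exact: grid_le_refl.
  apply: grid_le_trans z'z; rewrite -cn; apply: cle => //; lia.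
have ni : i != n.+1 by apply/eqP; lia.
rewrite (negbTE ni); apply: cle => //; lia.
Qed.

Definition is_down (S : {set Q}) :=
  [forall u, forall w, (u \in S) && grid_le w u ==> (w \in S)].

Lemma downP (S : {set Q}) u w : is_down S -> u \in S -> grid_le w u -> w \in S.
Proof.
by move=> /forallP /(_ u) /forallP /(_ w) /implyP H uS wu; apply: H; rewrite uS wu.
Qed.

Lemma rank_sum m : \sum_(d <= r < d + m) s_kdr k d r = #|[set x : Q | rank0 x < m]|.
Proof.
have gr : forall x : Q, grid_rank x = rank0 x + d.
  move=> x; rewrite /grid_rank /rank0.
  under eq_bigr do rewrite -addn1.
  by rewrite big_split /= sum_nat_const card_ord muln1.
elim: m => [|m IH].
  rewrite addn0 big_geq //; apply/esym/eqP; rewrite cards_eq0; apply/eqP/setP => x.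
  by rewrite !inE ltn0.
rewrite addnS big_nat_recr /= ?leq_addr // IH.
have -> : [set x : Q | rank0 x < m.+1] =
   [set x : Q | rank0 x < m] :|: [set x : Q | grid_rank x == d + m].
  apply/setP => x; rewrite !inE gr; apply/idP/idP; first by move=> h; apply/orP; lia.
  by case/orP; lia.
rewrite cardsU.
have -> : [set x : Q | rank0 x < m] :&: [set x : Q | grid_rank x == d + m] = set0.
  apply/setP => x; rewrite !inE gr; apply/negP; lia.
by rewrite cards0 subn0.
Qed.

End Grid.

Lemma linext dP (P : finPOrderType dP) : exists s : P -> nat,
  injective s /\ (forall a, s a < #|P|) /\ (forall a b, (a <= b)%O -> s a <= s b).
Proof.
pose key (a : P) := #|[set b : P | (b < a)%O]| * #|P| + enum_rank a.
have rk : forall a : P, (enum_rank a : nat) < #|P| by move=> a; exact: ltn_ord.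
have key_mono : forall a b : P, (a < b)%O -> key a < key b.
  move=> a b ab.
  have : #|[set c : P | (c < a)%O]| < #|[set c : P | (c < b)%O]|.
    apply: proper_card; apply/properP; split.
      by apply/subsetP => c; rewrite !inE => ca; exact: Order.POrderTheory.lt_trans ca ab.
    by exists a; rewrite !inE ?ab ?Order.POrderTheory.ltxx.
  rewrite /key; move: (rk a) (rk b); set ca := #|[set c : P | (c < a)%O]|; set cb := #|[set c : P | (c < b)%O]|.
  move=> h1 h2 h3.
  have : (ca.+1 * #|P| <= cb * #|P|)%N by apply: leq_mul.
  nia.
have key_inj : injective key.
  move=> a b; rewrite /key; move: (rk a) (rk b).
  set ca := #|[set c : P | (c < a)%O]|; set cb := #|[set c : P | (c < b)%O]|.
  move=> h1 h2 e.
  have eca : ca = cb.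
    case: (ltngtP ca cb) => // h.
      have : (ca.+1 * #|P| <= cb * #|P|)%N by apply: leq_mul. nia.
    have : (cb.+1 * #|P| <= ca * #|P|)%N by apply: leq_mul. nia.
  rewrite eca in e.
  have : (enum_rank a : nat) = enum_rank b by lia.
  by move/val_inj/enum_rank_inj.
pose s (a : P) := #|[set b : P | key b < key a]|.
have s_mono_lt : forall a b, key a < key b -> s a < s b.
  move=> a b ab; apply: proper_card; apply/properP; split.
    by apply/subsetP => c; rewrite !inE => ca; exact: ltn_trans ca ab.
  by exists a; rewrite !inE ?ab ?ltnn.
exists s; split; [|split].
- move=> a b e; apply: key_inj.
  case: (ltngtP (key a) (key b)) => // h.
    by have := s_mono_lt _ _ h; rewrite e ltnn.
  by have := s_mono_lt _ _ h; rewrite e ltnn.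
- move=> a; rewrite /s -cardsT; apply: proper_card; apply/properP; split.
    exact: subsetT.
  by exists a; rewrite !inE ?ltnn.
- move=> a b; rewrite Order.POrderTheory.le_eqVlt => /orP [/eqP ->|ab] //.
  by apply: ltnW; apply: s_mono_lt; apply: key_mono.
Qed.

Theorem proposition1p7 (p d : nat) (dP : Order.disp_t) (P : finPOrderType dP)
  (k : nat) :
  2 <= p -> 2 <= d -> #|P| = p -> 0 < k ->
  sat P (@grid_le k d) <= \sum_(d <= r < d + p - 1) s_kdr k d r.
Proof.
move=> hp hd hP hk.
pose cond (S : {set grid k d}) := is_down S && weak_free P (@grid_le k d) S.
have c0 : cond set0.
  rewrite /cond; apply/andP; split.
    by apply/forallP=> u; apply/forallP=> w; rewrite in_set0.
  rewrite /weak_free /contains_weak; apply/negP => /existsP [f /and3P [_ /forallP H _]].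
  have : 0 < #|P| by rewrite hP; lia.
  by case/card_gt0P => a _; move: (H a); rewrite in_set0.
case: (arg_maxnP (fun S : {set grid k d} => #|S|) c0) => F /andP [Fdown Ffree] Fmax.
have Fsat : weak_saturated P (@grid_le k d) F.
  rewrite /weak_saturated Ffree /=; apply/forallP => x; apply/implyP => xF.
  pose condy (y : grid k d) := grid_le y x && (y \notin F).
  have cx : condy x by rewrite /condy grid_le_refl xF.
  case: (arg_minnP (@rank0 k d) cx) => y /andP [yx yF] ymin.
  have Ydown : is_down (y |: F).
    apply/forallP => u; apply/forallP => w; apply/implyP => /andP [].
    rewrite in_setU1 => /orP [/eqP -> | uF] wu.
      case: (w =P y) => [->|wy]; first by rewrite setU11.
      rewrite in_setU1; apply/orP; right; apply: contraT => wF.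
      have h1 := ymin w (introT andP (conj (grid_le_trans wu yx) wF)).
      have h2 := rank0_lt wu (introN eqP wy).
      lia.
    by rewrite in_setU1 (downP Fdown uF wu) orbT.
  have : contains_weak P (@grid_le k d) (y |: F).
    apply: contraT => nc.
    have cY : cond (y |: F) by rewrite /cond Ydown; exact: nc.
    have := Fmax _ cY; rewrite cardsU1 yF /=; lia.
  case/existsP => f /and3P [/injectiveP finj /forallP fin /forallP fmono].
  have [q fq] : exists q, f q = y.
    case: (pickP (fun q => f q == y)) => [q /eqP fq | none]; first by exists q.
    exfalso; move/negP: Ffree; apply; apply/existsP; exists f.
    apply/and3P; split; first by apply/injectiveP.
      by apply/forallP => a; have := fin a; rewrite in_setU1 none.
    by apply/forallP.
  have fF : forall a, a != q -> f a \in F.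
    move=> a aq; have := fin a; rewrite in_setU1 => /orP [/eqP fa|//].
    by rewrite (finj a q (etrans fa (esym fq))) eqxx in aq.
  apply/existsP; exists [ffun a => if a == q then x else f a].
  apply/and3P; split.
  - apply/injectiveP => a b; rewrite !ffunE.
    case: (a =P q) => [->|aq]; case: (b =P q) => [->|bq] //.
    + by move=> e; move: (fF b (introN eqP bq)); rewrite -e (negbTE xF).
    + by move=> e; move: (fF a (introN eqP aq)); rewrite e (negbTE xF).
    + exact: finj.
  - apply/forallP => a; rewrite ffunE; case: eqP => [_|aq]; first by rewrite setU11.
    by rewrite in_setU1 fF ?orbT //; apply/eqP.
  - apply/forallP => a; apply/forallP => b; apply/implyP => ab; rewrite !ffunE.
    have fab := implyP (forallP (fmono a) b) ab.
    case: (a =P q) => [ea|aq]; case: (b =P q) => [eb|bq].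
    + exact: grid_le_refl.
    + exfalso; move: yF; rewrite -fq -ea (downP Fdown (fF b (introN eqP bq)) fab) //.
    + by apply: grid_le_trans yx; rewrite -fq -eb.
    + exact: fab.
have Fsmall : F \subset [set x : grid k d | rank0 x < p - 1].
  apply/subsetP => z zF; rewrite inE; apply: contraT; rewrite -leqNgt => hz.
  have [c [cn [crank cle]]] := chain_below (erefl (rank0 z)).
  have [s [sinj [sbound smono]]] := linext P.
  have sle : forall a, s a <= rank0 z by move=> a; have := sbound a; rewrite hP; lia.
  case/negP: Ffree; apply/existsP; exists [ffun a => c (s a)].
  apply/and3P; split.
  - apply/injectiveP => a b; rewrite !ffunE => e; apply: sinj.
    by rewrite -(crank _ (sle a)) -(crank _ (sle b)) e.
  - apply/forallP => a; rewrite ffunE; apply: (downP Fdown zF).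
    by rewrite -cn; apply: cle.
  - apply/forallP => a; apply/forallP => b; apply/implyP => ab; rewrite !ffunE.
    by apply: cle; [exact: smono|exact: sle].
have -> : d + p - 1 = d + (p - 1) by lia.
rewrite rank_sum.
apply: leq_trans (subset_leq_card Fsmall).
exact: bigmin_le.
Qed.
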